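(* Let $G$ be the line graph of some graph, where $G$ has arbitrary infinite order. Then for every assignment of lists of size $2$ to the vertices of $G$, $G$ admits a majority vertex-coloring from these lists.
   Context: Given lists $L(x)$ for the vertices $x$ of $G$, a vertex-coloring from the lists is a map $c$ with $c(x)\in L(x)$ for each vertex $x$. It is a majority vertex-coloring if for every vertex $x$, the cardinality of the set of neighbors of $x$ having color $c(x)$ is at most the cardinality of the set of neighbors of $x$ having a color different from $c(x)$. *)

(* Defs.v *)
From Stdlib Require Import List.

Definition simple_graph (V : Type) (adj : V -> V -> Prop) : Prop :=
  (forall x, ~ adj x x) /\ (forall x y, adj x y -> adj y x).

(* (V, adj) is (isomorphic to) the line graph of a simple graph H with
   vertex type W: each vertex x of G is an edge {u x, v x} of H (u x <> v x),
   distinct vertices of G are distinct edges of H, and the edges of H are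
   exactly these; two vertices of G are adjacent iff they are distinct edges
   sharing an endpoint. *)
Definition is_line_graph (V : Type) (adj : V -> V -> Prop) : Prop :=
  exists (W : Type) (u v : V -> W),
    (forall x, u x <> v x) /\
    (forall x y, ((u x = u y /\ v x = v y) \/ (u x = v y /\ v x = u y)) -> x = y) /\
    (forall x y, adj x y <->
       (x <> y /\ (u x = u y \/ u x = v y \/ v x = u y \/ v x = v y))).

Definition infinite_type (V : Type) : Prop :=
  ~ exists l : list V, forall x, In x l.

Definition card_le (A B : Type) : Prop :=
  exists f : A -> B, forall a1 a2, f a1 = f a2 -> a1 = a2.

Definition list_size2 {C : Type} (Lx : C -> Prop) : Prop :=
  exists a b : C, a <> b /\ forall c, Lx c <-> (c = a \/ c = b).

Definition majority_coloring_from {V C : Type} (adj : V -> V -> Prop)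
    (L : V -> C -> Prop) (c : V -> C) : Prop :=
  (forall x, L x (c x)) /\
  (forall x, card_le {y : V | adj x y /\ c y = c x}
                     {y : V | adj x y /\ c y <> c x}).

(* Main.v *)
Require Import Defs.
From Stdlib Require Import List Permutation Classical ClassicalEpsilon ProofIrrelevance Arith Lia.
Import ListNotations.

Module ZornWrap.
From mathcomp Require Import all_boot boolp classical_sets.
Local Open Scope classical_set_scope.
Lemma zorn_sets (T : Type) (P : (T -> Prop) -> Prop) :
  (forall F : (T -> Prop) -> Prop, (forall A, F A -> P A) ->
     (forall A B, F A -> F B -> (forall t, A t -> B t) \/ (forall t, B t -> A t)) ->
     P (fun t => exists A, F A /\ A t)) ->
  exists A, P A /\ forall B, (forall t, A t -> B t) -> P B -> forall t, B t -> A t.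
Proof.
move=> H.
have [|A [PA Amax]] := @Zorn_bigcup T P.
  move=> F FP Ftot.
  have := H F FP.
  have E : (\bigcup_(X in F) X) = (fun t => exists A, F A /\ A t).
    apply/funext=> t; apply/propext; split; first by case=> X FX Xt; exists X.
    by case=> X [FX Xt]; exists X.
  rewrite E; apply=> A B FA FB.
  by case: (Ftot A B FA FB) => h; [left|right]=> t; apply: h.
exists A; split=> // B AB PB t Bt.
apply: contrapT => nAt.
apply: (Amax B) => //; split; first by move=> s; apply: AB.
by move=> BA; apply: nAt; apply: BA.
Qed.
End ZornWrap.

Set Bullet Behavior "Strict Subproofs".

Definition dec (P : Prop) : bool := if excluded_middle_informative P then true else false.
Lemma dec_true P : dec P = true <-> P.
Proof. unfold dec; destruct (excluded_middle_informative P); split; auto; discriminate. Qed.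
Lemma dec_false P : dec P = false <-> ~ P.
Proof. unfold dec; destruct (excluded_middle_informative P); split; intros; auto; try discriminate; contradiction. Qed.

Lemma decT (P : Prop) : P -> dec P = true. Proof. apply dec_true. Qed.
Lemma decT' (P : Prop) : dec P = true -> P. Proof. apply dec_true. Qed.
Lemma decF (P : Prop) : ~ P -> dec P = false. Proof. apply dec_false. Qed.
Lemma decF' (P : Prop) : dec P = false -> ~ P. Proof. apply dec_false. Qed.

Definition ind (P : Prop) : nat := if excluded_middle_informative P then 1 else 0.

Section Gen.
Variable V : Type.
Definition Vdec : forall x y : V, {x = y} + {x <> y} := fun x y => excluded_middle_informative (x = y).

Fixpoint cnt (P : V -> Prop) (l : list V) : nat :=
  match l with [] => 0 | y :: l' => ind (P y) + cnt P l' end.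

Lemma cnt_ext P Q l : (forall y, In y l -> (P y <-> Q y)) -> cnt P l = cnt Q l.
Proof.
  induction l as [|y l IH]; simpl; intros H; auto.
  rewrite IH by (intros; apply H; auto).
  unfold ind; destruct (excluded_middle_informative (P y)), (excluded_middle_informative (Q y)); auto;
  exfalso; [apply n; apply H| apply n; apply H]; auto.
Qed.

Lemma cnt_le P Q l : (forall y, In y l -> P y -> Q y) -> cnt P l <= cnt Q l.
Proof.
  induction l as [|y l IH]; simpl; intros H; auto.
  assert (cnt P l <= cnt Q l) by (apply IH; intros; apply H; auto).
  unfold ind; destruct (excluded_middle_informative (P y)), (excluded_middle_informative (Q y)); try lia.
  exfalso; apply n; apply H; auto.
Qed.

Lemma cnt_zero P l : (forall y, In y l -> ~ P y) -> cnt P l = 0.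
Proof.
  induction l as [|y l IH]; simpl; intros H; auto.
  rewrite IH by (intros; apply H; auto).
  unfold ind; destruct (excluded_middle_informative (P y)); auto. exfalso; eapply H; eauto.
Qed.

Lemma cnt_split P Q l : cnt P l = cnt (fun y => P y /\ Q y) l + cnt (fun y => P y /\ ~ Q y) l.
Proof.
  induction l as [|y l IH]; simpl; auto. rewrite IH.
  unfold ind; destruct (excluded_middle_informative (P y)), (excluded_middle_informative (P y /\ Q y)),
     (excluded_middle_informative (P y /\ ~ Q y)); try lia; tauto.
Qed.

Lemma cnt_pt (Q : Prop) z l : NoDup l -> In z l -> cnt (fun y => y = z /\ Q) l = ind Q.
Proof.
  induction l as [|y l IH]; simpl; intros Hn Hz; [contradiction|].
  inversion Hn; subst.
  destruct Hz as [<-|Hz].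
  - rewrite cnt_zero. 2:{ intros y0 Hy0 [-> _]; contradiction. }
    unfold ind; destruct (excluded_middle_informative (y = y /\ Q)), (excluded_middle_informative Q); tauto.
  - rewrite IH by auto. unfold ind at 1.
    destruct (excluded_middle_informative (y = z /\ Q)) as [[-> _]|]; [contradiction|]. lia.
Qed.

Fixpoint lsum (f : V -> nat) (l : list V) : nat :=
  match l with [] => 0 | y :: l' => f y + lsum f l' end.

Lemma lsum_ext f g l : (forall y, In y l -> f y = g y) -> lsum f l = lsum g l.
Proof. induction l; simpl; intros H; [reflexivity|]. rewrite (H a) by auto. rewrite IHl by (intros; apply H; auto). reflexivity. Qed.

Lemma lsum_add f g l : lsum (fun y => f y + g y) l = lsum f l + lsum g l.
Proof. induction l; simpl; auto. rewrite IHl; lia. Qed.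

Lemma lsum_zero f l : (forall y, In y l -> f y = 0) -> lsum f l = 0.
Proof. induction l; simpl; intros H; [reflexivity|]. rewrite (H a) by auto. rewrite IHl by (intros; apply H; auto). reflexivity. Qed.

Lemma lsum_pt f z l : NoDup l -> In z l -> (forall y, In y l -> y <> z -> f y = 0) -> lsum f l = f z.
Proof.
  induction l as [|y l IH]; simpl; intros Hn Hz H; [contradiction|].
  inversion Hn; subst.
  destruct Hz as [<-|Hz].
  - rewrite lsum_zero; [lia|]. intros y0 Hy0. apply H; auto. intros ->; contradiction.
  - rewrite (H y) by (auto; intros ->; contradiction). rewrite IH; auto.
Qed.

Lemma lsum_ind P l : lsum (fun y => ind (P y)) l = cnt P l.
Proof. induction l; simpl; auto. Qed.

Lemma cnt_filter P l : cnt P l = length (filter (fun y => dec (P y)) l).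
Proof.
  induction l as [|y l IH]; simpl; auto.
  rewrite IH. unfold ind, dec. destruct (excluded_middle_informative (P y)); simpl; reflexivity.
Qed.

Lemma cnt_perm P l1 l2 : NoDup l1 -> NoDup l2 -> (forall y, P y -> (In y l1 <-> In y l2)) ->
  cnt P l1 = cnt P l2.
Proof.
  intros N1 N2 H. rewrite !cnt_filter. apply Permutation_length.
  apply NoDup_Permutation; try apply NoDup_filter; auto.
  intros y. rewrite !filter_In. split; intros [A B]; apply decT' in B; split; try apply decT; auto; apply H; auto.
Qed.

Fixpoint idx (y : V) (l : list V) : nat :=
  match l with [] => 0 | z :: l' => if Vdec y z then 0 else S (idx y l') end.

Lemma idx_lt y l : In y l -> idx y l < length l.
Proof.
  induction l as [|z l IH]; simpl; intros H; [contradiction|].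
  destruct (Vdec y z); [lia|]. destruct H as [->|H]; [congruence|]. specialize (IH H); lia.
Qed.

Lemma idx_nth y l d : In y l -> nth (idx y l) l d = y.
Proof.
  induction l as [|z l IH]; simpl; intros H; [contradiction|].
  destruct (Vdec y z); auto. destruct H as [->|H]; [congruence|]. auto.
Qed.

Lemma idx_inj y1 y2 l : In y1 l -> In y2 l -> idx y1 l = idx y2 l -> y1 = y2.
Proof.
  intros H1 H2 E. destruct l as [|d l']; [contradiction|].
  rewrite <- (idx_nth y1 (d::l') d), <- (idx_nth y2 (d::l') d), E; auto.
Qed.

Lemma list_inj (A B : V -> Prop) l1 l2 :
  NoDup l1 -> NoDup l2 -> (forall y, A y <-> In y l1) -> (forall y, B y <-> In y l2) ->
  length l1 <= length l2 ->
  exists g : V -> V, (forall y, A y -> B (g y)) /\ (forall y1 y2, A y1 -> A y2 -> g y1 = g y2 -> y1 = y2).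
Proof.
  intros N1 N2 HA HB Hlen.
  destruct l2 as [|d l2'].
  - destruct l1 as [|e l1']; simpl in Hlen; [|lia].
    exists (fun y => y); split; intros; exfalso; eapply HA; eauto.
  - exists (fun y => nth (idx y l1) (d :: l2') d). split.
    + intros y Hy. apply HB. apply nth_In. apply HA in Hy. pose proof (idx_lt _ _ Hy). lia.
    + intros y1 y2 H1 H2 E. apply HA in H1; apply HA in H2.
      apply (idx_inj _ _ l1); auto.
      pose proof (idx_lt _ _ H1); pose proof (idx_lt _ _ H2).
      eapply NoDup_nth in E; eauto; lia.
Qed.

End Gen.
Arguments Vdec {V}. Arguments cnt {V}. Arguments lsum {V}. Arguments idx {V}.
Arguments cnt_ext {V}. Arguments cnt_le {V}. Arguments cnt_zero {V}. Arguments cnt_split {V}.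
Arguments cnt_pt {V}. Arguments lsum_ext {V}. Arguments lsum_add {V}. Arguments lsum_pt {V}.
Arguments lsum_zero {V}. Arguments lsum_ind {V}. Arguments cnt_filter {V}. Arguments cnt_perm {V}.
Arguments idx_lt {V}. Arguments idx_nth {V}. Arguments idx_inj {V}. Arguments list_inj {V}.

Lemma chain_fin (T : Type) (F : (T -> Prop) -> Prop)
  (tot : forall A B, F A -> F B -> (forall t, A t -> B t) \/ (forall t, B t -> A t)) (l : list T) :
  (forall t, In t l -> exists A, F A /\ A t) -> l = [] \/ exists A, F A /\ forall t, In t l -> A t.
Proof.
  induction l as [|t l IH]; intros H; auto. right.
  destruct (H t (or_introl eq_refl)) as [A [FA At]].
  destruct IH as [->|[B [FB HB]]].
  - intros; apply H; simpl; auto.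
  - exists A; split; auto. intros t' [<-|[]]; auto.
  - destruct (tot A B FA FB) as [AB|BA].
    + exists B; split; auto. intros t' [<-|Ht]; auto.
    + exists A; split; auto. intros t' [<-|Ht]; auto.
Qed.

Section Compact.
Variables (X J : Type) (sat : J -> (X -> bool) -> Prop) (supp : J -> list X).
Hypothesis inv : forall j s s', (forall x, In x (supp j) -> s x = s' x) -> sat j s -> sat j s'.
Hypothesis fin : forall K : list J, exists s, forall j, In j K -> sat j s.

Definition Pc (A : X * bool -> Prop) : Prop :=
  (forall x b1 b2, A (x, b1) -> A (x, b2) -> b1 = b2) /\
  (forall K : list J, exists s, (forall x b, A (x, b) -> s x = b) /\ forall j, In j K -> sat j s).

Definition fixs (A : X * bool -> Prop) (s : X -> bool) (x : X) : bool :=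
  if excluded_middle_informative (A (x, true)) then true
  else if excluded_middle_informative (A (x, false)) then false else s x.

Lemma fixs_agree A s : (forall x b1 b2, A (x, b1) -> A (x, b2) -> b1 = b2) ->
  forall x b, A (x, b) -> fixs A s x = b.
Proof.
  intros Hf x b H. unfold fixs.
  destruct (excluded_middle_informative (A (x, true))); [eapply Hf; eauto|].
  destruct (excluded_middle_informative (A (x, false))); [eapply Hf; eauto|].
  destruct b; contradiction.
Qed.

Lemma fixs_out A s x : ~ A (x, true) -> ~ A (x, false) -> fixs A s x = s x.
Proof. intros H1 H2; unfold fixs; destruct (excluded_middle_informative (A (x, true))); [contradiction|];
  destruct (excluded_middle_informative (A (x, false))); [contradiction|]; auto. Qed.

Lemma Pc_chain (F : (X * bool -> Prop) -> Prop) : (forall A, F A -> Pc A) ->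
  (forall A B, F A -> F B -> (forall t, A t -> B t) \/ (forall t, B t -> A t)) ->
  Pc (fun t => exists A, F A /\ A t).
Proof.
  intros FP tot. set (U := fun t => exists A, F A /\ A t).
  assert (Uf : forall x b1 b2, U (x, b1) -> U (x, b2) -> b1 = b2).
  { intros x b1 b2 [A [FA HA]] [B [FB HB]].
    destruct (tot A B FA FB) as [AB|BA].
    - eapply (proj1 (FP B FB)); eauto.
    - eapply (proj1 (FP A FA)); eauto. }
  split; auto.
  intros K.
  set (Xs := concat (map supp K)).
  set (lt := filter (fun p => dec (U p)) (list_prod Xs [true; false])).
  assert (Hlt : forall x b, In x Xs -> U (x, b) -> In (x, b) lt).
  { intros x b Hx Hu. unfold lt. apply filter_In. split; [apply in_prod; auto; destruct b; simpl; auto|].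
    apply decT; auto. }
  assert (Hsupp : forall j x, In j K -> In x (supp j) -> In x Xs).
  { intros j x Hj Hx. unfold Xs. apply in_concat. exists (supp j); split; auto. apply in_map; auto. }
  destruct (chain_fin _ F tot lt) as [E|[A [FA HA]]].
  - intros t Ht. unfold lt in Ht. apply filter_In in Ht. destruct Ht as [_ Ht]. apply decT' in Ht. exact Ht.
  - destruct (fin K) as [s Hs]. exists (fixs U s). split; [apply fixs_agree; auto|].
    intros j Hj. apply (inv j s); auto.
    intros x Hx. symmetry. apply fixs_out.
    + intros Hu. pose proof (Hlt x true (Hsupp j x Hj Hx) Hu). rewrite E in H; contradiction.
    + intros Hu. pose proof (Hlt x false (Hsupp j x Hj Hx) Hu). rewrite E in H; contradiction.
  - destruct (proj2 (FP A FA) K) as [s [Hag Hs]]. exists (fixs U s). split; [apply fixs_agree; auto|].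
    intros j Hj. apply (inv j s); auto.
    intros x Hx. unfold fixs.
    destruct (excluded_middle_informative (U (x, true))) as [Hu|Hu].
    + apply Hag. apply HA. apply Hlt; eauto.
    + destruct (excluded_middle_informative (U (x, false))) as [Hu'|Hu']; auto.
      apply Hag. apply HA. apply Hlt; eauto.
Qed.

Lemma compactness : exists s, forall j, sat j s.
Proof.
  destruct (ZornWrap.zorn_sets (X * bool) Pc) as [A [PA Amax]].
  { intros F FP tot. apply Pc_chain; auto. }
  assert (tot : forall x, exists b, A (x, b)).
  { intros x. apply NNPP; intros Hn.
    assert (Hb : forall b, ~ Pc (fun t => A t \/ t = (x, b))).
    { intros b Hp. apply Hn. exists b. apply (Amax _ (fun t Ht => or_introl Ht) Hp). auto. }
    assert (Hk : forall b, exists K, forall s, (forall y c, A (y, c) -> s y = c) -> s x = b -> ~ forall j, In j K -> sat j s).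
    { intros b. apply NNPP; intros Hk. apply (Hb b). split.
      - intros y b1 b2 [H1|H1] [H2|H2].
        + eapply (proj1 PA); eauto.
        + injection H2; intros; subst. exfalso; apply Hn; eauto.
        + injection H1; intros; subst. exfalso; apply Hn; eauto.
        + congruence.
      - intros K. apply NNPP; intros HK. apply Hk. exists K. intros s Hag Hsx Hs. apply HK.
        exists s. split; auto. intros y c [H|H]; auto. injection H; intros; subst; auto. }
    destruct (Hk true) as [K1 H1]. destruct (Hk false) as [K2 H2].
    destruct (proj2 PA (K1 ++ K2)) as [s [Hag Hs]].
    destruct (s x) eqn:Ex.
    - apply (H1 s Hag Ex). intros j Hj; apply Hs, in_or_app; auto.
    - apply (H2 s Hag Ex). intros j Hj; apply Hs, in_or_app; auto. }
  exists (fun x => dec (A (x, true))). intros j.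
  destruct (proj2 PA [j]) as [s [Hag Hs]].
  apply (inv j s); [|apply Hs; simpl; auto].
  intros x _. destruct (tot x) as [b Hb]. rewrite (Hag x b Hb).
  destruct b.
  - symmetry; apply decT; auto.
  - symmetry; apply decF. intros H. pose proof (proj1 PA x _ _ Hb H). discriminate.
Qed.
End Compact.

Section Pot.
Variables (V C : Type) (a b : V -> C).
Hypothesis ab : forall x, a x <> b x.
Definition col (s : V -> bool) x := if s x then a x else b x.

Lemma phi_split (R : V -> V -> Prop) (Rsym : forall x y, R x y -> R y x) (Rirr : forall x, ~ R x x)
  X x0 : NoDup X -> In x0 X ->
  lsum (fun x => cnt (R x) X) X = 2 * cnt (R x0) X +
     lsum (fun x => cnt (fun y => R x y /\ x <> x0 /\ y <> x0) X) X.
Proof.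
  intros NX Hx0.
  transitivity (lsum (fun x => cnt (fun y => R x y /\ x = x0) X + cnt (fun y => R x y /\ x <> x0 /\ y = x0) X
     + cnt (fun y => R x y /\ x <> x0 /\ y <> x0) X) X).
  { apply lsum_ext. intros x _. rewrite (cnt_split (R x) (fun _ => x = x0)).
    rewrite (cnt_split (fun y => R x y /\ x <> x0) (fun y => y = x0)).
    rewrite <- Nat.add_assoc. f_equal. f_equal.
    - apply cnt_ext; intros; tauto.
    - apply cnt_ext; intros; tauto. }
  rewrite !lsum_add.
  assert (E1 : lsum (fun x => cnt (fun y => R x y /\ x = x0) X) X = cnt (R x0) X).
  { rewrite (lsum_pt _ x0); auto.
    - apply cnt_ext; intros; tauto.
    - intros y _ Hy. apply cnt_zero. intros; tauto. }
  assert (E2 : lsum (fun x => cnt (fun y => R x y /\ x <> x0 /\ y = x0) X) X = cnt (R x0) X).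
  { transitivity (lsum (fun x => ind (R x x0 /\ x <> x0)) X).
    - apply lsum_ext; intros x _. rewrite <- (cnt_pt _ x0 X); auto.
      apply cnt_ext; intros y _; split; [intros [H1 [H2 ->]]|intros [-> [H1 H2]]]; auto.
    - rewrite lsum_ind. apply cnt_ext. intros x _. split; [intros [H _]; auto|intros H; split; auto].
      intros ->. apply (Rirr x0); auto. }
  lia.
Qed.

Lemma potential (adj : V -> V -> Prop) (asym : forall x y, adj x y -> adj y x) (airr : forall x, ~ adj x x)
  (Free : V -> Prop) (X : list V) (NX : NoDup X) (Cons : V -> Prop)
  (HC : forall x, Cons x -> Free x /\ In x X /\ forall y, adj x y -> In y X) (s0 : V -> bool) :
  exists s, (forall y, ~ Free y -> s y = s0 y) /\ forall x, Cons x ->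
    cnt (fun y => adj x y /\ col s y = col s x) X <= cnt (fun y => adj x y /\ col s y <> col s x) X.
Proof.
  set (R := fun s x y => adj x y /\ col s x = col s y /\ (Free x \/ Free y)).
  set (Phi := fun s => lsum (fun x => cnt (R s x) X) X).
  assert (Rsym : forall s x y, R s x y -> R s y x).
  { intros s x y [H1 [H2 H3]]; split; [auto|split; [auto|tauto]]. }
  assert (Rirr : forall s x, ~ R s x x). { intros s x [H _]; apply (airr x); auto. }
  set (flip := fun (s : V -> bool) x0 y => if Vdec y x0 then negb (s x0) else s y).
  assert (step : forall s x0, Cons x0 -> ~ cnt (fun y => adj x0 y /\ col s y = col s x0) X <=
                cnt (fun y => adj x0 y /\ col s y <> col s x0) X -> Phi (flip s x0) < Phi s).
  { intros s x0 Hc Hv. destruct (HC x0 Hc) as [Fx0 [Ix0 Nx0]].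
    set (s' := flip s x0).
    assert (Es' : forall y, y <> x0 -> s' y = s y) by (intros y Hy; unfold s', flip; destruct (Vdec y x0); congruence).
    assert (Ecol : forall y, y <> x0 -> col s' y = col s y) by (intros y Hy; unfold col; rewrite Es'; auto).
    assert (Cx0 : col s' x0 <> col s x0) by
          (unfold col, s', flip; destruct (Vdec x0 x0); [|congruence]; destruct (s x0); simpl; auto).
    unfold Phi; rewrite (phi_split (R s') (Rsym s') (Rirr s') X x0), (phi_split (R s) (Rsym s) (Rirr s) X x0); auto.
    assert (Erest : lsum (fun x => cnt (fun y => R s' x y /\ x <> x0 /\ y <> x0) X) X =
                      lsum (fun x => cnt (fun y => R s x y /\ x <> x0 /\ y <> x0) X) X).
    { apply lsum_ext; intros x _; apply cnt_ext; intros y _; unfold R.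
      split; intros [[H1 [H2 H3]] [H4 H5]]; (split; [split; [auto|split; [|auto]]|auto]).
      - rewrite <- (Ecol x), <- (Ecol y); auto.
      - rewrite (Ecol x), (Ecol y); auto. }
    assert (E1 : cnt (R s x0) X = cnt (fun y => adj x0 y /\ col s y = col s x0) X).
    { apply cnt_ext; intros y _; unfold R; split; [intros [H1 [H2 _]]; auto|intros [H1 H2]; split; [|split]; auto]. }
    assert (E2 : cnt (R s' x0) X <= cnt (fun y => adj x0 y /\ col s y <> col s x0) X).
    { apply cnt_le; intros y _ [H1 [H2 _]]; split; auto.
      assert (y <> x0) by (intros ->; apply (airr x0); auto).
      rewrite <- Ecol by auto. rewrite <- H2; auto. }
    lia. }
  assert (main : forall n s, Phi s <= n -> (forall y, ~ Free y -> s y = s0 y) ->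
    exists s', (forall y, ~ Free y -> s' y = s0 y) /\ forall x, Cons x ->
    cnt (fun y => adj x y /\ col s' y = col s' x) X <= cnt (fun y => adj x y /\ col s' y <> col s' x) X).
  { induction n as [|n IH]; intros s Hn Hs;
    (destruct (classic (exists x0, Cons x0 /\ ~ cnt (fun y => adj x0 y /\ col s y = col s x0) X <=
                cnt (fun y => adj x0 y /\ col s y <> col s x0) X)) as [[x0 [Hc Hv]]|Hno];
      [|exists s; split; auto; intros x Hx; apply NNPP; intros Hv; apply Hno; eauto]).
    - pose proof (step s x0 Hc Hv). lia.
    - apply (IH (flip s x0)); [pose proof (step s x0 Hc Hv); lia|].
      intros y Hy. unfold flip. destruct (Vdec y x0); auto. subst. exfalso; apply Hy, (HC x0 Hc). }
  apply (main (Phi s0) s0); auto.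
Qed.
End Pot.
Arguments col {V C}. Arguments potential {V C}. Arguments phi_split {V}.

Lemma collect (A T : Type) (R : A -> T -> Prop) (l : list A) : exists lt : list T,
  (forall t, In t lt -> exists p, In p l /\ R p t) /\ forall p, In p l -> (exists t, R p t) -> exists t, In t lt /\ R p t.
Proof.
  induction l as [|p l [lt [H1 H2]]].
  - exists []; split; [intros t []|intros p []].
  - destruct (classic (exists t, R p t)) as [[t Ht]|Hn].
    + exists (t :: lt); split.
      * intros t' [<-|Ht']; [exists p; simpl; auto|]. destruct (H1 t' Ht') as [p' [Hp' Hr]]; exists p'; simpl; auto.
      * intros p' [<-|Hp'] Hex; [exists t; simpl; auto|]. destruct (H2 p' Hp' Hex) as [t' [Ht' Hr]]; exists t'; simpl; auto.
    + exists lt; split.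
      * intros t' Ht'. destruct (H1 t' Ht') as [p' [Hp' Hr]]; exists p'; simpl; auto.
      * intros p' [<-|Hp'] Hex; [contradiction|]. auto.
Qed.

Section InfSeq.
Variables (V : Type) (pick : list V -> V).
Fixpoint pref (n : nat) : list V := match n with 0 => [] | S n' => pick (pref n') :: pref n' end.
Lemma pref_in n m : n < m -> In (pick (pref n)) (pref m).
Proof.
  induction m as [|m IH]; intros H; [lia|]. simpl.
  destruct (Nat.eq_dec n m) as [->|ne]; [left; auto|right; apply IH; lia].
Qed.
End InfSeq.

Lemma infseq (V : Type) (T : V -> Prop) : (forall l : list V, exists y, T y /\ ~ In y l) ->
  exists d : nat -> V, (forall n, T (d n)) /\ forall n1 n2, d n1 = d n2 -> n1 = n2.
Proof.
  intros H. set (pick := fun l => proj1_sig (constructive_indefinite_description _ (H l))).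
  assert (Hp : forall l, T (pick l) /\ ~ In (pick l) (l)).
  { intros l. unfold pick. destruct (constructive_indefinite_description _ (H l)); simpl; auto. }
  exists (fun n => pick (pref V pick n)). split; [intros; apply Hp|].
  intros n1 n2 E. destruct (Nat.lt_trichotomy n1 n2) as [Hl|[Hl|Hl]]; auto; exfalso.
  - apply (proj2 (Hp (pref V pick n2))). rewrite <- E. apply pref_in; auto.
  - apply (proj2 (Hp (pref V pick n1))). rewrite E. apply pref_in; auto.
Qed.

Section Pair.
Variables (V W C : Type) (u v : V -> W) (a b : V -> C).
Hypothesis ab : forall x, a x <> b x.

Definition inE (x : V) (w : W) := u x = w \/ v x = w.
Definition finS (w : W) := exists l, forall x, inE x w -> In x l.
Definition Inf (w : W) := ~ finS w.
Definition trip := (W * V * V)%type.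
Definition Padj (M : trip -> Prop) x y := exists w, M (w, x, y).
Definition degen (M : trip -> Prop) := forall S : list V, S <> [] -> exists x, In x S /\
  forall y1 y2, In y1 S -> In y2 S -> Padj M x y1 -> Padj M x y2 -> y1 = y2.
Definition validA (M : trip -> Prop) := forall w y y', M (w, y, y') -> Inf w /\ inE y w /\ inE y' w /\ y <> y' /\ M (w, y', y).
Definition validB (M : trip -> Prop) := forall w y y1 y2, M (w, y, y1) -> M (w, y, y2) -> y1 = y2.
Definition valid M := validA M /\ validB M /\ degen M.
Definition unp (M : trip -> Prop) w y := inE y w /\ forall y', ~ M (w, y, y').

Section V.
Variable M : trip -> Prop.
Hypothesis VM : valid M.

Lemma Padj_sym x y : Padj M x y -> Padj M y x.
Proof. intros [w H]. exists w. apply (proj1 VM) in H. tauto. Qed.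
Lemma Padj_irr x y : Padj M x y -> x <> y.
Proof. intros [w H]. apply (proj1 VM) in H. tauto. Qed.
Lemma Padj_at x y : Padj M x y -> exists w, M (w, x, y) /\ (w = u x \/ w = v x).
Proof. intros [w H]. exists w; split; auto. pose proof (proj1 VM _ _ _ H) as [_ [[E|E] _]]; auto. Qed.

Lemma deg2 x y1 y2 y3 : Padj M x y1 -> Padj M x y2 -> Padj M x y3 -> y1 = y2 \/ y1 = y3 \/ y2 = y3.
Proof.
  intros H1 H2 H3. destruct (Padj_at _ _ H1) as [w1 [M1 E1]], (Padj_at _ _ H2) as [w2 [M2 E2]],
    (Padj_at _ _ H3) as [w3 [M3 E3]].
  pose proof (proj1 (proj2 VM)) as B.
  destruct E1 as [->| ->], E2 as [->| ->], E3 as [->| ->]; eauto.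
Qed.

Lemma unp_deg1 w y z1 z2 : unp M w y -> Padj M y z1 -> Padj M y z2 -> z1 = z2.
Proof.
  intros [Hy Hn] H1 H2. destruct (Padj_at _ _ H1) as [w1 [M1 E1]], (Padj_at _ _ H2) as [w2 [M2 E2]].
  assert (w1 <> w) by (intros ->; eapply Hn; eauto).
  assert (w2 <> w) by (intros ->; eapply Hn; eauto).
  assert (w1 = w2) by (destruct Hy as [<-| <-], E1, E2; congruence).
  subst. eapply (proj1 (proj2 VM)); eauto.
Qed.

Lemma peel : forall D y, In y D -> (exists n, In n D /\ Padj M y n) ->
  (forall n1 n2, In n1 D -> In n2 D -> Padj M y n1 -> Padj M y n2 -> n1 = n2) ->
  (forall x, In x D -> x <> y -> exists z1 z2, In z1 D /\ In z2 D /\ z1 <> z2 /\ Padj M x z1 /\ Padj M x z2) -> False.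
Proof.
  intros D. remember (length D) as k. revert D Heqk.
  induction k as [k IH] using (well_founded_induction lt_wf).
  intros D Hk y Hy [n [Hn Hyn]] Huniq Hdeg.
  assert (ny : n <> y) by (intro E; subst; apply (Padj_irr _ _ Hyn); auto).
  destruct (Hdeg n Hn ny) as [z1 [z2 [Hz1 [Hz2 [Hz12 [Hnz1 Hnz2]]]]]].
  assert (Hny : Padj M n y) by (apply Padj_sym; auto).
  assert (exists n2, In n2 D /\ n2 <> y /\ Padj M n n2) as [n2 [Hn2 [Hn2y Hnn2]]].
  { destruct (deg2 _ _ _ _ Hny Hnz1 Hnz2) as [E|[E|E]]; [exists z2; subst; auto|exists z1; subst; auto|contradiction]. }
  set (D' := remove (Vdec) y D).
  apply (IH (length D')) with (D := D') (y := n); auto.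
  - subst k. apply remove_length_lt; auto.
  - apply in_in_remove; auto.
  - exists n2; split; auto. apply in_in_remove; auto.
  - intros p1 p2 Hp1 Hp2 H1 H2. apply in_remove in Hp1, Hp2.
    destruct (deg2 _ _ _ _ Hny H1 H2) as [E|[E|E]]; auto; exfalso; destruct Hp1, Hp2; congruence.
  - intros x Hx Hxn. apply in_remove in Hx. destruct Hx as [Hx Hxy].
    destruct (Hdeg x Hx Hxy) as [p1 [p2 [Hp1 [Hp2 [Hp12 [H1 H2]]]]]].
    assert (forall p, Padj M x p -> p <> y).
    { intros p Hp ->. apply Hxn. apply (Huniq x n); auto. apply Padj_sym; auto. }
    exists p1, p2. repeat split; auto; apply in_in_remove; auto.
Qed.

Lemma two_choose : forall S, exists s : V -> bool, forall y y', In y S -> In y' S -> Padj M y y' -> col a b s y <> col a b s y'.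
Proof.
  intros S. remember (length S) as k. revert S Heqk.
  induction k as [k IH] using (well_founded_induction lt_wf).
  intros S Hk. destruct S as [|x0 S0].
  { exists (fun _ => true). intros y y' []. }
  destruct (proj2 (proj2 VM) (x0 :: S0) ltac:(discriminate)) as [x [Hx Hlow]].
  set (S' := remove Vdec x (x0 :: S0)).
  destruct (IH (length S') ltac:(subst k; apply remove_length_lt; auto) S' eq_refl) as [s' Hs'].
  destruct (classic (exists n, In n (x0 :: S0) /\ Padj M x n)) as [[n [Hn Hxn]]|Hno].
  - assert (nx : n <> x) by (intro E; subst; apply (Padj_irr _ _ Hxn); auto).
    set (bx := if excluded_middle_informative (a x = col a b s' n) then false else true).
    set (s := fun y => if Vdec y x then bx else s' y).
    assert (Es : forall y, y <> x -> col a b s y = col a b s' y).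
    { intros y Hy. unfold col, s. destruct (Vdec y x); congruence. }
    assert (Ex : col a b s x <> col a b s' n).
    { unfold col at 1, s. destruct (Vdec x x); [|congruence]. unfold bx.
      destruct (excluded_middle_informative (a x = col a b s' n)); auto. intros E; apply (ab x); congruence. }
    exists s. intros y y' Hy Hy' H.
    destruct (Vdec y x) as [->|Hyx]; destruct (Vdec y' x) as [->|Hy'x].
    + exfalso; apply (Padj_irr _ _ H); auto.
    + rewrite (Es y') by auto. assert (y' = n) by (apply (Hlow y' n); auto). subst; auto.
    + rewrite (Es y) by auto. assert (y = n) by (apply (Hlow y n); auto; apply Padj_sym; auto). subst; auto.
    + rewrite !Es by auto. apply Hs'; auto; apply in_in_remove; auto.
  - exists s'. intros y y' Hy Hy' H.
    destruct (Vdec y x) as [->|Hyx]; [exfalso; apply Hno; eauto|].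
    destruct (Vdec y' x) as [->|Hy'x]; [exfalso; apply Hno; exists y; split; auto; apply Padj_sym; auto|].
    apply Hs'; auto; apply in_in_remove; auto.
Qed.
End V.

Lemma valid_empty : valid (fun _ => False).
Proof.
  split; [intros ? ? ? []|split; [intros ? ? ? ? []|]].
  intros [|x S] H; [congruence|]. exists x; split; simpl; auto. intros y1 y2 _ _ [w []].
Qed.

Lemma valid_chain (F : (trip -> Prop) -> Prop) : (forall A, F A -> valid A) ->
  (forall A B, F A -> F B -> (forall t, A t -> B t) \/ (forall t, B t -> A t)) ->
  valid (fun t => exists A, F A /\ A t).
Proof.
  intros FV tot. set (U := fun t => exists A, F A /\ A t).
  split; [|split].
  - intros w y y' [A [FA HA]]. destruct (proj1 (FV A FA) _ _ _ HA) as [? [? [? [? ?]]]].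
    repeat split; auto. exists A; auto.
  - intros w y y1 y2 [A [FA HA]] [B [FB HB]].
    destruct (tot A B FA FB) as [AB|BA].
    + eapply (proj1 (proj2 (FV B FB))); eauto.
    + eapply (proj1 (proj2 (FV A FA))); eauto.
  - intros S HS.
    destruct (collect (V * V) trip (fun p t => U t /\ snd (fst t) = fst p /\ snd t = snd p) (list_prod S S))
      as [lt [H1 H2]].
    destruct (chain_fin _ F tot lt) as [E|[A [FA HA]]].
    + intros t Ht. destruct (H1 t Ht) as [p [_ [Ut _]]]. exact Ut.
    + destruct S as [|x S0]; [congruence|]. exists x; split; simpl; auto.
      intros y1 y2 Hy1 Hy2 [w Hw] _. exfalso.
      destruct (H2 (x, y1)) as [t [Ht _]]; [apply in_prod; simpl; auto|exists (w, x, y1); simpl; auto|].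
      rewrite E in Ht; contradiction.
    + destruct (proj2 (proj2 (FV A FA)) S HS) as [x [Hx Hlow]].
      exists x; split; auto. intros y1 y2 Hy1 Hy2 [w1 Hw1] [w2 Hw2].
      destruct (H2 (x, y1)) as [[[t1 t2] t3] [Ht [_ [E2 E3]]]]; [apply in_prod; auto|exists (w1, x, y1); simpl; auto|].
      destruct (H2 (x, y2)) as [[[r1 r2] r3] [Hr [_ [F2 F3]]]]; [apply in_prod; auto|exists (w2, x, y2); simpl; auto|].
      simpl in *. subst. apply Hlow; auto; [exists t1|exists r1]; apply HA; auto.
Qed.

Definition addM (M : trip -> Prop) w p q := fun t => M t \/ t = (w, p, q) \/ t = (w, q, p).

Lemma Padj_add M w p q x z : Padj (addM M w p q) x z -> Padj M x z \/ (x = p /\ z = q) \/ (x = q /\ z = p).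
Proof.
  intros [w' [H|[H|H]]]; [left; exists w'; auto|right; left|right; right]; injection H; intros; subst; auto.
Qed.

Lemma max_core M (VM : valid M) (Mmax : forall B, (forall t, M t -> B t) -> valid B -> forall t, B t -> M t)
  w (Hw : Inf w) p q : unp M w p -> unp M w q -> p <> q ->
  exists S, In p S /\ (exists n, In n S /\ Padj M p n) /\
    (forall y, In y S -> y <> p -> y <> q -> exists z1 z2, In z1 S /\ In z2 S /\ z1 <> z2 /\ Padj M y z1 /\ Padj M y z2).
Proof.
  intros [Hp Up] [Hq Uq] pq.
  set (A := addM M w p q).
  assert (VA : validA A).
  { intros w' y y' [H|[H|H]].
    - destruct (proj1 VM _ _ _ H) as [? [? [? [? ?]]]]. repeat split; auto. left; auto.
    - injection H; intros; subst. repeat split; auto. right; right; auto.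
    - injection H; intros; subst. repeat split; auto. right; left; auto. }
  assert (VB : validB A).
  { intros w' y y1 y2 H1 H2.
    destruct H1 as [H1|[H1|H1]], H2 as [H2|[H2|H2]];
      try (injection H1; intros; subst); try (injection H2; intros; subst); auto;
      try (eapply (proj1 (proj2 VM)); eauto; fail); try congruence;
      exfalso; first [eapply Up; eauto; fail | eapply Uq; eauto]. }
  assert (ND : ~ degen A).
  { intros DA. apply (Up q). apply (Mmax A); [intros t Ht; left; auto|split; [|split]; auto|].
    right; left; auto. }
  assert (exists S, S <> [] /\ forall x, In x S -> exists z1 z2, In z1 S /\ In z2 S /\ z1 <> z2 /\
            Padj A x z1 /\ Padj A x z2) as [S [HSn HS]].
  { apply NNPP; intros Hn. apply ND. intros S HSn. apply NNPP; intros Hx.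
    apply Hn. exists S; split; auto. intros x Hx'. apply NNPP; intros Hz. apply Hx. exists x; split; auto.
    intros y1 y2 Hy1 Hy2 H1 H2. apply NNPP; intros Ne. apply Hz. exists y1, y2; auto. }
  assert (pS : In p S).
  { apply NNPP; intros np. destruct (proj2 (proj2 VM) S HSn) as [x0 [Hx0 Hlow]].
    destruct (HS x0 Hx0) as [z1 [z2 [Hz1 [Hz2 [Hz [H1 H2]]]]]].
    apply Hz. apply Hlow; auto.
    - destruct (Padj_add _ _ _ _ _ _ H1) as [H|[[-> ->]|[-> ->]]]; auto; contradiction.
    - destruct (Padj_add _ _ _ _ _ _ H2) as [H|[[-> ->]|[-> ->]]]; auto; contradiction. }
  exists S; split; auto. split.
  - destruct (HS p pS) as [z1 [z2 [Hz1 [Hz2 [Hz [H1 H2]]]]]].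
    destruct (Padj_add _ _ _ _ _ _ H1) as [H|[[_ E1]|[E1 _]]]; [exists z1; auto| |congruence].
    destruct (Padj_add _ _ _ _ _ _ H2) as [H'|[[_ E2]|[E2 _]]]; [exists z2; auto| |congruence].
    congruence.
  - intros y Hy yp yq. destruct (HS y Hy) as [z1 [z2 [Hz1 [Hz2 [Hz [H1 H2]]]]]].
    exists z1, z2. repeat split; auto.
    + destruct (Padj_add _ _ _ _ _ _ H1) as [H|[[E _]|[E _]]]; auto; congruence.
    + destruct (Padj_add _ _ _ _ _ _ H2) as [H|[[E _]|[E _]]]; auto; congruence.
Qed.

Lemma max_unp M (VM : valid M) (Mmax : forall B, (forall t, M t -> B t) -> valid B -> forall t, B t -> M t)
  w (Hw : Inf w) : exists U, forall y, unp M w y -> In y U.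
Proof.
  assert (no3 : forall y1 y2 y3, unp M w y1 -> unp M w y2 -> unp M w y3 -> y1 <> y2 -> y1 <> y3 -> y2 <> y3 -> False).
  { intros y1 y2 y3 U1 U2 U3 d12 d13 d23.
    destruct (max_core M VM Mmax w Hw y1 y2 U1 U2 d12) as [S12 [p12 [[n [Hn Hyn]] H12]]].
    destruct (max_core M VM Mmax w Hw y1 y3 U1 U3 d13) as [S13 [p13 [[n' [Hn' Hyn']] H13]]].
    assert (n2 : ~ In y2 S13).
    { intros H. destruct (H13 y2 H (not_eq_sym d12) d23) as [z1 [z2 [_ [_ [Hz [A1 A2]]]]]].
      apply Hz. apply (unp_deg1 M VM w y2); auto. }
    assert (n3 : ~ In y3 S12).
    { intros H. destruct (H12 y3 H (not_eq_sym d13) (not_eq_sym d23)) as [z1 [z2 [_ [_ [Hz [A1 A2]]]]]].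
      apply Hz. apply (unp_deg1 M VM w y3); auto. }
    assert (nn : n = n') by (apply (unp_deg1 M VM w y1); auto).
    subst n'.
    set (D := filter (fun x => dec (In x S13)) S12).
    assert (HD : forall x, In x D <-> In x S12 /\ In x S13).
    { intros x; unfold D; rewrite filter_In; split; intros [A B]; split; auto; [apply decT' in B|apply decT]; auto. }
    apply (peel M VM D y1).
    - apply HD; auto.
    - exists n; split; auto. apply HD; auto.
    - intros m1 m2 _ _ A1 A2. apply (unp_deg1 M VM w y1); auto.
    - intros x Hx xy1. apply HD in Hx. destruct Hx as [Hx12 Hx13].
      assert (xy2 : x <> y2) by (intros ->; contradiction).
      assert (xy3 : x <> y3) by (intros ->; contradiction).
      destruct (H12 x Hx12 xy1 xy2) as [z1 [z2 [Hz1 [Hz2 [Hz [A1 A2]]]]]].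
      destruct (H13 x Hx13 xy1 xy3) as [z3 [z4 [Hz3 [Hz4 [Hz' [A3 A4]]]]]].
      exists z1, z2. repeat split; auto; apply HD; split; auto.
      + destruct (deg2 M VM _ _ _ _ A1 A3 A4) as [->|[->|E]]; auto; contradiction.
      + destruct (deg2 M VM _ _ _ _ A2 A3 A4) as [->|[->|E]]; auto; contradiction. }
  destruct (classic (exists y1, unp M w y1)) as [[y1 U1]|N1].
  2:{ exists []. intros y Hy; apply N1; eauto. }
  destruct (classic (exists y2, unp M w y2 /\ y2 <> y1)) as [[y2 [U2 d]]|N2].
  2:{ exists [y1]. intros y Hy. destruct (Vdec y y1) as [->|ne]; simpl; auto. exfalso; apply N2; eauto. }
  exists [y1; y2]. intros y Hy. destruct (Vdec y y1) as [->|ne1]; simpl; auto.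
  destruct (Vdec y y2) as [->|ne2]; simpl; auto. exfalso. apply (no3 y1 y2 y); auto.
Qed.

Lemma star M (VM : valid M) (Mmax : forall B, (forall t, M t -> B t) -> valid B -> forall t, B t -> M t)
  (s : V -> bool) (Hs : forall w y y', M (w, y, y') -> col a b s y <> col a b s y')
  w (Hw : Inf w) x (Hx : inE x w) (B : list V) : exists g : V -> V,
  (forall y, (inE y w /\ y <> x /\ col a b s y = col a b s x) \/ In y B ->
     inE (g y) w /\ g y <> x /\ col a b s (g y) <> col a b s x) /\
  (forall y1 y2, ((inE y1 w /\ y1 <> x /\ col a b s y1 = col a b s x) \/ In y1 B) ->
                 ((inE y2 w /\ y2 <> x /\ col a b s y2 = col a b s x) \/ In y2 B) -> g y1 = g y2 -> y1 = y2).
Proof.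
  set (c := col a b s) in *.
  set (m := fun y => match excluded_middle_informative (exists y', M (w, y, y')) with
                     | left h => proj1_sig (constructive_indefinite_description _ h) | right _ => y end).
  assert (Hm : forall y, (exists y', M (w, y, y')) -> M (w, y, m y)).
  { intros y h. unfold m. destruct (excluded_middle_informative (exists y', M (w, y, y'))) as [h'|n]; [|contradiction].
    destruct (constructive_indefinite_description _ h'); simpl; auto. }
  assert (Hmm : forall y, (exists y', M (w, y, y')) -> m (m y) = y).
  { intros y h. pose proof (Hm y h) as H1. pose proof (proj1 VM _ _ _ H1) as [_ [_ [_ [_ H2]]]].
    pose proof (Hm (m y) (ex_intro _ y H2)) as H3. eapply (proj1 (proj2 VM)); eauto. }
  destruct (max_unp M VM Mmax w Hw) as [U HU].
  set (T := fun y => inE y w /\ y <> x /\ c y <> c x).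
  assert (Tm : forall y, inE y w -> y <> x -> c y = c x -> (exists y', M (w, y, y')) -> T (m y)).
  { intros y Hy yx cy h. pose proof (Hm y h) as H1. pose proof (proj1 VM _ _ _ H1) as [_ [_ [Hmy [ne H2]]]].
    split; [auto|split].
    - intros E. rewrite E in H1. pose proof (proj1 VM _ _ _ H1) as [_ [_ [_ [_ H3]]]].
      apply (Hs _ _ _ H3). fold c; congruence.
    - pose proof (Hs _ _ _ H1) as H3. fold c in H3. congruence. }
  assert (Tinf : forall l, exists y, T y /\ ~ In y l).
  { intros l. apply NNPP; intros Hn. apply Hw. exists (l ++ map m l ++ U ++ [x]).
    intros y Hy. apply in_or_app.
    destruct (Vdec y x) as [->|yx]; [right; apply in_or_app; right; apply in_or_app; right; simpl; auto|].
    destruct (classic (c y = c x)) as [cy|cy].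
    - destruct (classic (exists y', M (w, y, y'))) as [h|h].
      + right. apply in_or_app; left. apply in_map_iff. exists (m y); split; [apply Hmm; auto|].
        apply NNPP; intros ni; apply Hn; exists (m y); split; auto.
      + right. apply in_or_app; right. apply in_or_app; left. apply HU. split; auto.
        intros y' H'; apply h; eauto.
    - left. apply NNPP; intros ni; apply Hn; exists y; split; auto. split; auto. }
  destruct (infseq V T Tinf) as [d [Hd dinj]].
  set (Ex := nodup Vdec (U ++ B)). set (k := length Ex).
  assert (NEx : NoDup Ex) by apply NoDup_nodup.
  assert (HEx : forall y, In y U \/ In y B -> In y Ex).
  { intros y H. apply nodup_In. apply in_or_app; auto. }
  set (g := fun y => if excluded_middle_informative (In y Ex) then d (idx y Ex) else
           match excluded_middle_informative (exists n, m y = d n) with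
           | left h => d (proj1_sig (constructive_indefinite_description _ h) + k) | right _ => m y end).
  set (Dom := fun y => (inE y w /\ y <> x /\ c y = c x) \/ In y B).
  assert (Dout : forall y, Dom y -> ~ In y Ex -> inE y w /\ y <> x /\ c y = c x /\ exists y', M (w, y, y')).
  { intros y [H|H] ni; [|exfalso; apply ni, HEx; auto].
    destruct H as [H1 [H2 H3]]. repeat split; auto. apply NNPP; intros h. apply ni, HEx. left. apply HU.
    split; auto. intros y' H'; apply h; eauto. }
  assert (gcase : forall y, Dom y -> (In y Ex /\ g y = d (idx y Ex)) \/
     (~ In y Ex /\ exists n, m y = d n /\ g y = d (n + k)) \/ (~ In y Ex /\ (forall n, m y <> d n) /\ g y = m y)).
  { intros y Dy. unfold g. destruct (excluded_middle_informative (In y Ex)) as [i|ni]; [left; auto|right].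
    destruct (excluded_middle_informative (exists n, m y = d n)) as [h|h].
    - left. split; auto. destruct (constructive_indefinite_description _ h) as [n Hn]; simpl. exists n; auto.
    - right. split; auto. split; auto. intros n E; apply h; eauto. }
  exists g. split.
  - intros y Dy. fold Dom in Dy. destruct (gcase y Dy) as [[_ ->]|[[ni [n [_ ->]]]|[ni [_ ->]]]]; try apply Hd.
    destruct (Dout y Dy ni) as [A1 [A2 [A3 A4]]]. apply Tm; auto.
  - intros y1 y2 D1 D2 E. fold Dom in D1, D2.
    assert (midx : forall y, In y Ex -> idx y Ex < k) by (intros; apply idx_lt; auto).
    destruct (gcase y1 D1) as [[i1 g1]|[[i1 [n1 [m1 g1]]]|[i1 [m1 g1]]]];
    destruct (gcase y2 D2) as [[i2 g2]|[[i2 [n2 [m2 g2]]]|[i2 [m2 g2]]]]; rewrite g1, g2 in E.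
    + apply dinj in E. apply (idx_inj y1 y2 Ex); auto.
    + apply dinj in E. pose proof (midx y1 i1). lia.
    + exfalso. apply (m2 (idx y1 Ex)). auto.
    + apply dinj in E. pose proof (midx y2 i2). lia.
    + apply dinj in E. assert (n1 = n2) by lia. subst.
      destruct (Dout y1 D1 i1) as [_ [_ [_ h1]]], (Dout y2 D2 i2) as [_ [_ [_ h2]]].
      rewrite <- (Hmm y1 h1), <- (Hmm y2 h2). congruence.
    + exfalso. apply (m2 (n1 + k)). auto.
    + exfalso. apply (m1 (idx y2 Ex)). auto.
    + exfalso. apply (m1 (n2 + k)). auto.
    + destruct (Dout y1 D1 i1) as [_ [_ [_ h1]]], (Dout y2 D2 i2) as [_ [_ [_ h2]]].
      rewrite <- (Hmm y1 h1), <- (Hmm y2 h2). congruence.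
Qed.

End Pair.

Lemma inj_card (V : Type) (A B : V -> Prop) (g : V -> V) : (forall y, A y -> B (g y)) ->
  (forall y1 y2, A y1 -> A y2 -> g y1 = g y2 -> y1 = y2) -> card_le {y | A y} {y | B y}.
Proof.
  intros HB Hi. exists (fun p => exist _ (g (proj1_sig p)) (HB _ (proj2_sig p))).
  intros [y1 p1] [y2 p2] E. simpl in E. injection E; intros E'.
  pose proof (Hi y1 y2 p1 p2 E'). subst. f_equal. apply proof_irrelevance.
Qed.

Section Main.
Variables (V W C : Type) (u v : V -> W) (adj : V -> V -> Prop).
Hypothesis Huv : forall x, u x <> v x.
Hypothesis Hinj : forall x y, ((u x = u y /\ v x = v y) \/ (u x = v y /\ v x = u y)) -> x = y.
Hypothesis Hadj : forall x y, adj x y <-> (x <> y /\ (u x = u y \/ u x = v y \/ v x = u y \/ v x = v y)).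
Variables (a b : V -> C).
Hypothesis ab : forall x, a x <> b x.

Notation inE := (inE V W u v).
Notation finS := (finS V W u v).
Notation Inf := (Inf V W u v).
Notation valid := (valid V W u v).
Notation col := (col a b).

Lemma two_common t x w z : inE t w -> inE t z -> inE x w -> inE x z -> w <> z -> t = x.
Proof.
  unfold inE. intros H1 H2 H3 H4 wz. apply Hinj.
  pose proof (Huv t); pose proof (Huv x).
  destruct H1, H2, H3, H4; first [left; split; congruence | right; split; congruence | exfalso; congruence].
Qed.

Lemma adj_sym x y : adj x y -> adj y x.
Proof. rewrite !Hadj. intros [H1 H2]; split; [congruence|intuition congruence]. Qed.
Lemma adj_irr x : ~ adj x x.
Proof. rewrite Hadj. tauto. Qed.

Lemma adj_iff x w z y : (u x = w /\ v x = z \/ u x = z /\ v x = w) ->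
  (adj x y <-> x <> y /\ (inE y w \/ inE y z)).
Proof.
  intros E. rewrite Hadj. unfold inE.
  destruct E as [[<- <-]|[<- <-]]; split; intros [H1 H2]; split; auto; intuition congruence.
Qed.

Definition FF x := finS (u x) /\ finS (v x).

Lemma nbl_ex x : exists l, NoDup l /\ (FF x -> forall y, In y l <-> adj x y).
Proof.
  destruct (classic (FF x)) as [[[lu Hu] [lv Hv]]|nF]; [|exists []; split; [constructor|tauto]].
  exists (nodup Vdec (filter (fun y => dec (adj x y)) (lu ++ lv))). split; [apply NoDup_nodup|].
  intros _ y. rewrite nodup_In, filter_In. split; [intros [_ H]; apply decT'; auto|intros H; split; [|apply decT; auto]].
  apply in_or_app. rewrite (adj_iff x (u x) (v x)) in H by auto. destruct H as [_ [H|H]]; auto.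
Qed.

Definition nbl x := proj1_sig (constructive_indefinite_description _ (nbl_ex x)).
Lemma nbl_nd x : NoDup (nbl x).
Proof. unfold nbl; destruct (constructive_indefinite_description _ (nbl_ex x)) as [l [H Hn]]; simpl; auto. Qed.
Lemma nbl_in x : FF x -> forall y, In y (nbl x) <-> adj x y.
Proof. unfold nbl; destruct (constructive_indefinite_description _ (nbl_ex x)) as [l [Hn H]]; simpl; auto. Qed.

Definition J := (trip V W + V)%type.
Definition satJ (M : trip V W -> Prop) (j : J) (s : V -> bool) : Prop :=
  match j with
  | inl t => M t -> col s (snd (fst t)) <> col s (snd t)
  | inr x => FF x -> cnt (fun y => adj x y /\ col s y = col s x) (nbl x) <=
                     cnt (fun y => adj x y /\ col s y <> col s x) (nbl x)
  end.
Definition suppJ (j : J) : list V :=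
  match j with inl t => [snd (fst t); snd t] | inr x => x :: nbl x end.

Lemma col_ext (s s' : V -> bool) y : s y = s' y -> col s y = col s' y.
Proof. unfold col. intros ->; auto. Qed.

Section WithM.
Variable M : trip V W -> Prop.
Hypothesis VM : valid M.
Hypothesis Mmax : forall B, (forall t, M t -> B t) -> valid B -> forall t, B t -> M t.

Lemma satJ_inv j s s' : (forall x, In x (suppJ j) -> s x = s' x) -> satJ M j s -> satJ M j s'.
Proof.
  destruct j as [[[w y] y']|x]; simpl; intros E H.
  - intros Ht. rewrite <- !(col_ext s s'); auto.
  - intros F. specialize (H F).
    assert (Ex : col s x = col s' x) by (apply col_ext; auto).
    assert (E1 : cnt (fun y => adj x y /\ col s' y = col s' x) (nbl x) = cnt (fun y => adj x y /\ col s y = col s x) (nbl x)).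
    { apply cnt_ext. intros y Hy. rewrite <- Ex, <- (col_ext s s' y); [tauto|auto]. }
    assert (E2 : cnt (fun y => adj x y /\ col s' y <> col s' x) (nbl x) = cnt (fun y => adj x y /\ col s y <> col s x) (nbl x)).
    { apply cnt_ext. intros y Hy. rewrite <- Ex, <- (col_ext s s' y); [tauto|auto]. }
    rewrite E1, E2; auto.
Qed.

Lemma not_FF_E y w : inE y w -> Inf w -> ~ FF y.
Proof. intros [<-| <-] Hw [F1 F2]; apply Hw; auto. Qed.

Lemma satJ_fin K : exists s, forall j, In j K -> satJ M j s.
Proof.
  set (Xs := nodup Vdec (concat (map suppJ K))).
  assert (NXs : NoDup Xs) by apply NoDup_nodup.
  assert (HXs : forall j y, In j K -> In y (suppJ j) -> In y Xs).
  { intros j y Hj Hy. apply nodup_In. apply in_concat. exists (suppJ j); split; auto. apply in_map; auto. }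
  destruct (two_choose V W C u v a b ab M VM Xs) as [s0 Hs0].
  destruct (potential a b ab adj adj_sym adj_irr FF Xs NXs (fun x => In (inr x) K /\ FF x)) with (s0 := s0)
    as [s [Hag Hcnt]].
  { intros x [Hx Fx]. split; auto. split; [apply (HXs (inr x)); simpl; auto|].
    intros y Hy. apply (HXs (inr x)); simpl; auto. right. apply nbl_in; auto. }
  exists s. intros [[[w y] y']|x] Hj; simpl.
  - intros Ht. destruct (proj1 VM _ _ _ Ht) as [Hw [Hy [Hy' _]]].
    rewrite !(col_ext s s0); try (apply Hag; eapply not_FF_E; eauto).
    apply Hs0; [apply (HXs _ y Hj)|apply (HXs _ y' Hj)|exists w; auto]; simpl; auto.
  - intros Fx. specialize (Hcnt x (conj Hj Fx)).
    rewrite !(cnt_perm _ (nbl x) Xs); auto using nbl_nd.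
    + intros y [Hy _]. split; [intros _; apply (HXs (inr x)); simpl; auto; right; apply nbl_in; auto|].
      intros _; apply nbl_in; auto.
    + intros y [Hy _]. split; [intros _; apply (HXs (inr x)); simpl; auto; right; apply nbl_in; auto|].
      intros _; apply nbl_in; auto.
Qed.

Lemma global_col : exists s, forall j, satJ M j s.
Proof. apply (compactness V J (satJ M) suppJ satJ_inv satJ_fin). Qed.

Lemma card_x (s : V -> bool) (Hs : forall j, satJ M j s) x :
  card_le {y | adj x y /\ col s y = col s x} {y | adj x y /\ col s y <> col s x}.
Proof.
  assert (Hp : forall w y y', M (w, y, y') -> col s y <> col s y') by (intros w y y' H; apply (Hs (inl (w, y, y'))); auto).
  destruct (classic (FF x)) as [Fx|nF].
  - pose proof (Hs (inr x) Fx) as H. simpl in H.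
    destruct (list_inj (fun y => adj x y /\ col s y = col s x) (fun y => adj x y /\ col s y <> col s x)
      (filter (fun y => dec (adj x y /\ col s y = col s x)) (nbl x))
      (filter (fun y => dec (adj x y /\ col s y <> col s x)) (nbl x))) as [g [Hg1 Hg2]].
    + apply NoDup_filter, nbl_nd.
    + apply NoDup_filter, nbl_nd.
    + intros y. rewrite filter_In. split; [intros A; split; [apply nbl_in; tauto|apply decT; auto]|intros [_ A]; apply decT'; auto].
    + intros y. rewrite filter_In. split; [intros A; split; [apply nbl_in; tauto|apply decT; auto]|intros [_ A]; apply decT'; auto].
    + rewrite <- !cnt_filter. auto.
    + apply (inj_card V _ _ g); auto.
  - assert (exists w z, Inf w /\ (u x = w /\ v x = z \/ u x = z /\ v x = w)) as [w [z [Hw Ewz]]].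
    { destruct (classic (finS (u x))) as [F1|F1]; [destruct (classic (finS (v x))) as [F2|F2]|].
      - exfalso; apply nF; split; auto.
      - exists (v x), (u x); split; auto.
      - exists (u x), (v x); split; auto. }
    assert (wz : w <> z) by (destruct Ewz as [[<- <-]|[<- <-]]; auto).
    assert (xw : inE x w) by (unfold inE; tauto).
    assert (xz : inE x z) by (unfold inE; tauto).
    destruct (classic (finS z)) as [[Bz HBz]|Hz].
    + destruct (star V W C u v a b M VM Mmax s Hp w Hw x xw Bz) as [g [Hg1 Hg2]].
      assert (Dom : forall y, adj x y /\ col s y = col s x -> (inE y w /\ y <> x /\ col s y = col s x) \/ In y Bz).
      { intros y [A E]. rewrite (adj_iff x w z y Ewz) in A. destruct A as [A1 [A2|A2]]; [left; auto|right; auto]. }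
      apply (inj_card V _ _ g).
      * intros y Hy. destruct (Hg1 y (Dom y Hy)) as [B1 [B2 B3]]. split; auto.
        rewrite (adj_iff x w z _ Ewz). split; auto.
      * intros y1 y2 H1 H2 E. apply Hg2; auto.
    + destruct (star V W C u v a b M VM Mmax s Hp w Hw x xw []) as [gw [Hw1 Hw2]].
      destruct (star V W C u v a b M VM Mmax s Hp z Hz x xz []) as [gz [Hz1 Hz2]].
      set (g := fun y => if excluded_middle_informative (inE y w) then gw y else gz y).
      assert (Dom : forall y, adj x y /\ col s y = col s x ->
        (inE y w /\ g y = gw y /\ (inE y w /\ y <> x /\ col s y = col s x)) \/
        (~ inE y w /\ g y = gz y /\ (inE y z /\ y <> x /\ col s y = col s x))).
      { intros y [A E]. rewrite (adj_iff x w z y Ewz) in A. destruct A as [A1 A2]. unfold g.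
        destruct (excluded_middle_informative (inE y w)) as [i|ni]; [left|right]; repeat split; auto.
        destruct A2; tauto. }
      apply (inj_card V _ _ g).
      * intros y Hy. rewrite (adj_iff x w z _ Ewz).
        destruct (Dom y Hy) as [[_ [-> D]]|[_ [-> D]]].
        -- destruct (Hw1 y (or_introl D)) as [B1 [B2 B3]]. auto.
        -- destruct (Hz1 y (or_introl D)) as [B1 [B2 B3]]. auto.
      * intros y1 y2 H1 H2 E.
        destruct (Dom y1 H1) as [[_ [E1 D1]]|[_ [E1 D1]]], (Dom y2 H2) as [[_ [E2 D2]]|[_ [E2 D2]]];
          rewrite E1, E2 in E.
        -- apply Hw2; auto.
        -- exfalso. destruct (Hw1 y1 (or_introl D1)) as [B1 [B2 _]], (Hz1 y2 (or_introl D2)) as [C1 _].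
           apply B2. rewrite E in B1 |- *. apply (two_common _ x w z); auto.
        -- exfalso. destruct (Hz1 y1 (or_introl D1)) as [B1 [B2 _]], (Hw1 y2 (or_introl D2)) as [C1 _].
           apply B2. rewrite E in B1 |- *. apply (two_common _ x w z); auto.
        -- apply Hz2; auto.
Qed.
End WithM.

Lemma exists_major (L : V -> C -> Prop) (HL : forall x c, L x c <-> c = a x \/ c = b x) :
  exists c : V -> C, majority_coloring_from adj L c.
Proof.
  destruct (ZornWrap.zorn_sets (trip V W) valid) as [M [VM Mmax]].
  { intros F FV tot. apply valid_chain; auto. }
  destruct (global_col M VM) as [s Hs].
  exists (col s). split.
  - intros x. apply HL. unfold col. destruct (s x); auto.
  - intros x. apply (card_x M VM Mmax s Hs x).
Qed.
End Main.

Theorem mainTheorem4 (V : Type) (adj : V -> V -> Prop) :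
  simple_graph V adj -> is_line_graph V adj -> infinite_type V ->
  forall (C : Type) (L : V -> C -> Prop),
    (forall x, list_size2 (L x)) ->
    exists c : V -> C, majority_coloring_from adj L c.
Proof.
  intros _ [W [u [v [Huv [Hinj Hadj]]]]] _ C L HL.
  set (pa := fun x => constructive_indefinite_description _ (HL x)).
  set (a := fun x => proj1_sig (pa x)).
  set (pb := fun x => constructive_indefinite_description _ (proj2_sig (pa x))).
  set (b := fun x => proj1_sig (pb x)).
  assert (Hab : forall x, a x <> b x /\ forall c, L x c <-> c = a x \/ c = b x).
  { intros x. unfold b, a. destruct (pb x) as [bx Hbx]. simpl. exact Hbx. }
  apply (exists_major V W C u v adj Huv Hinj Hadj a b (fun x => proj1 (Hab x)) L (fun x => proj2 (Hab x))).
Qed.
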